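(* Let $p$ be an odd prime and $G$ a finite non-abelian $p$-group with cyclic center. If $\Omega_1(Z(G))\not\le\gamma_3(G)G^p$, then $G$ has a non-inner automorphism of order $p$.
   Context: $\Omega_1(X)=\langle x\in X:x^p=1\rangle$, $\gamma_3(G)$ is the third term of the lower central series, $G^p=\langle g^p:g\in G\rangle$. *)

(* Defs.v *)
From mathcomp Require Import all_boot all_order all_fingroup all_solvable.
Set Implicit Arguments. Unset Strict Implicit. Unset Printing Implicit Defensive.
Local Open Scope group_scope.

Definition Omega1 (gT : finGroupType) (p : nat) (X : {set gT}) : {set gT} :=
  <<[set x in X | x ^+ p == 1]>>.

Definition powgrp (gT : finGroupType) (p : nat) (G : {set gT}) : {set gT} :=
  <<[set x ^+ p | x in G]>>.

Definition inner_aut (gT : finGroupType) (G : {set gT}) (a : {perm gT}) : Prop :=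
  exists2 g, g \in G & forall x, x \in G -> a x = x ^ g.

(* Main.v *)
Require Import Defs.
From mathcomp Require Import all_boot all_order all_fingroup all_solvable.
Set Implicit Arguments. Unset Strict Implicit. Unset Printing Implicit Defensive.
Local Open Scope group_scope.

Section Gen.
Variables (gT : finGroupType) (G M : {group gT}).
Hypothesis maxM : maximal M G.
Hypothesis nMG : G \subset 'N(M).

Lemma gen_out t : t \in G -> t \notin M -> <[t]> * M = G.
Proof.
move=> Gt Mt.
have sJ : <[t]> <*> M \subset G by rewrite join_subG cycle_subG Gt; case/andP: (maxgroupp maxM).
have := sJ; rewrite subEproper => /predU1P [<-|].
  by rewrite norm_joinEl // cycle_subG; apply: (subsetP nMG).
case/maxgroupP: maxM => _ /[apply] /(_ (joing_subr _ _)) eqM.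
by case/negP: Mt; rewrite -eqM mem_gen // inE cycle_id.
Qed.
End Gen.

Section Constr.
Variables (gT : finGroupType) (G M : {group gT}) (p : nat) (y u : gT).
Hypotheses (pr_p : prime p) (maxM : maximal M G) (nMG : G \subset 'N(M))
  (iM : #|G : M| = p) (Gy : y \in G) (My : y \notin M) (Zu : u \in 'Z(M))
  (up : (y * u) ^+ p = y ^+ p) (u1 : u ^+ p = 1) (un1 : u != 1).

Let sMG : M \subset G. Proof. by case/andP: (maxgroupp maxM). Qed.
Let Mu : u \in M. Proof. by case/setIP: Zu. Qed.
Let Cu : u \in 'C(M). Proof. by case/setIP: Zu. Qed.
Let nMy : y \in 'N(M). Proof. exact: (subsetP nMG). Qed.
Let nMu : u \in 'N(M). Proof. exact: (subsetP nMG) (subsetP sMG _ Mu). Qed.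
Let Gu : u \in G. Proof. exact: (subsetP sMG). Qed.

Lemma ydiv n : y ^+ n \in M -> p %| n.
Proof.
have oc : #[coset M y] = p.
  have ne : #[coset M y] != 1%N.
    rewrite order_eq1; apply/negP => /eqP c1; case/negP: My.
    exact: coset_idr.
  apply/(prime_nt_dvdP pr_p ne).
  by rewrite -iM -card_quotient //; apply: order_dvdG; apply: mem_quotient.
move=> yM; rewrite -oc order_dvdn -morphX //. by apply/eqP; apply: coset_id. Qed.

Lemma yuM k : (y * u) ^+ k * y ^- k \in M.
Proof.
elim: k => [|k IH]; first by rewrite !expg0 invg1 mulg1 group1.
have -> : (y * u) ^+ k.+1 * y ^- k.+1 =
   ((y * u) ^+ k * y ^- k) * (u ^ (y ^- k.+1)).
  by rewrite /conjg invgK expgSr [X in _ * (X * (u * _))]expgSr !mulgA mulgKV.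
by rewrite groupM // memJ_norm // groupV groupX.
Qed.

Lemma conj_yu m k : m \in M -> m ^ ((y * u) ^+ k) = m ^ (y ^+ k).
Proof.
move=> Mm; elim: k => [|k IH]; first by rewrite !expg0.
rewrite !expgSr !conjgM IH.
have : (m ^ y ^+ k) ^ y \in M by rewrite !memJ_norm ?(groupX _ nMy).
move=> Mv; apply/conjg_fixP; apply/commgP.
have /centP cu := Cu; exact/esym/(cu _ Mv).
Qed.

Lemma key x i n : i <= n -> y ^- i * x \in M -> y ^- n * x \in M ->
  (y * u) ^+ i * y ^- i = (y * u) ^+ n * y ^- n.
Proof.
move=> lein Mi Mn; rewrite -(subnKC lein); set d := n - i.
have yd : y ^+ d \in M.
  have := groupM Mn (groupVr Mi).
  rewrite invMg invgK mulgA (mulgK x) -(subnKC lein) -/d expgnDr invMg mulgKV.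
  by rewrite groupV.
have [k dk] : exists k, d = (p * k)%N by exists (d %/ p); rewrite mulnC divnK // ydiv.
have ed : (y * u) ^+ d = y ^+ d by rewrite dk !expgnA up.
by rewrite !expgnDr ed invMg !mulgA mulgK.
Qed.

Definition wit x := if [pick i : 'I_#[y] | y ^- i * x \in M] is Some i then val i else 0%N.

Lemma witP x : x \in G -> y ^- (wit x) * x \in M.
Proof.
rewrite /wit; case: pickP => [//|none] Gx.
have : x \in <[y]> * M by rewrite (gen_out maxM nMG Gy My).
case/mulsgP => c m /cyclePmin [i lti ->] Mm xE.
by move: (none (Ordinal lti)); rewrite /= xE mulKg Mm.
Qed.

Definition af x := (y * u) ^+ (wit x) * y ^- (wit x) * x.

Lemma afE x n : y ^- n * x \in M -> af x = (y * u) ^+ n * y ^- n * x.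
Proof.
move=> Mn.
have Gx : x \in G.
  by rewrite -(mulKVg (y ^+ n) x) groupM ?groupX // (subsetP sMG).
rewrite /af; have Mi := witP Gx; congr (_ * _).
case: (leqP (wit x) n) => [le|/ltnW le]; first exact: (key le Mi Mn).
by symmetry; apply: (key le Mn Mi).
Qed.

Lemma afG x : x \in G -> af x \in G.
Proof.
by move=> Gx; rewrite /af groupM // (subsetP sMG) // yuM.
Qed.

Lemma afM : {in G &, {morph af : a b / a * b}}.
Proof.
move=> a b Ga Gb /=.
set i := wit a; set j := wit b.
have Ma := witP Ga; have Mb := witP Gb; rewrite -/i -/j in Ma Mb.
set m1 := y ^- i * a in Ma; set m2 := y ^- j * b in Mb.
have eab : y ^- (i + j) * (a * b) = m1 ^ (y ^+ j) * m2.
  by rewrite /m1 /m2 /conjg expgnDr invMg !mulgA mulgK.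
have Mab : y ^- (i + j) * (a * b) \in M by rewrite eab groupM // memJ_norm ?groupX.
rewrite (afE Mab) /af -/i -/j.
have -> : (y * u) ^+ i * y ^- i * a * ((y * u) ^+ j * y ^- j * b)
   = (y * u) ^+ i * m1 * ((y * u) ^+ j * m2) by rewrite /m1 /m2 !mulgA.
rewrite -mulgA eab -(conj_yu j Ma) expgnDr /conjg !mulgA mulgK.
by [].
Qed.


Definition afm := @Morphism gT gT G af afM.

Lemma af1 x : x \in G -> af x = 1 -> x = 1.
Proof.
move=> Gx e.
have Mx : x \in M.
  move: e; rewrite /af => e.
  by rewrite -(mulKg ((y * u) ^+ wit x * y ^- wit x) x) e mulg1 groupV yuM.
have M0 : y ^- 0 * x \in M by rewrite expg0 invg1 mul1g.
by rewrite -e (afE M0) expg0 invg1 !mul1g.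
Qed.

Lemma af_inj : 'injm afm.
Proof.
apply/injmP => a b Ga Gb /= e.
apply/eqP; rewrite eq_mulgV1; apply/eqP; apply: af1; first by rewrite groupM ?groupV.
have := morphM afm Ga (groupVr Gb); rewrite morphV //= => ->.
by rewrite e mulgV.
Qed.

Lemma af_im : afm @* G = G.
Proof.
apply/eqP; rewrite eqEcard card_injm ?af_inj // leqnn andbT morphimEdom.
by apply/subsetP => x /imsetP [z Gz ->]; exact: afG.
Qed.

Definition aa := aut af_inj af_im.

Lemma Aut_aa : aa \in Aut G.
Proof. exact: Aut_aut. Qed.

Lemma aaM m : m \in M -> aa m = m.
Proof.
move=> Mm; rewrite autE ?(subsetP sMG) //=.
have M0 : y ^- 0 * m \in M by rewrite expg0 invg1 mul1g.
by rewrite (afE M0) expg0 invg1 !mul1g.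
Qed.

Lemma aay : aa y = y * u.
Proof.
rewrite autE //=.
have M1 : y ^- 1 * y \in M by rewrite expg1 mulVg group1.
by rewrite (afE M1) !expg1 mulgKV.
Qed.

Lemma aa_morph : {in G &, {morph aa : a b / a * b}}.
Proof. exact/morphicP/(Aut_morphic Aut_aa). Qed.

Lemma order_aa : #[aa] = p.
Proof.
have Ab : aa ^+ p \in Aut G by rewrite groupX // Aut_aa.
have bM : {in G &, {morph aa ^+ p : a b / a * b}}.
  exact/morphicP/(Aut_morphic Ab).
have bX t k : t \in G -> (aa ^+ p) (t ^+ k) = ((aa ^+ p) t) ^+ k.
  move=> Gt; elim: k => [|k IH]; first by rewrite !expg0 permX_fix // aaM.
  by rewrite !expgS bM ?groupX // IH.
have iy k : iter k aa y = y * u ^+ k.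
  elim: k => [|k IH]; first by rewrite expg0 mulg1.
  by rewrite iterS IH aa_morph ?groupX // aay aaM ?groupX // expgS mulgA.
have a1 : aa ^+ p = 1.
  apply: (eq_Aut Ab (group1 _)) => x Gx; rewrite perm1.
  have Mw := witP Gx.
  rewrite -(mulKVg (y ^+ wit x) x) bM ?groupX //; last exact: (subsetP sMG).
  by rewrite bX // permX iy u1 mulg1 permX_fix ?aaM ?witP.
have ne : #[aa] != 1%N.
  rewrite order_eq1; apply/negP => /eqP e.
  have := aay; rewrite e perm1 => e2; case/negP: un1.
  by rewrite -(mulKg y u) -e2 mulVg.
by apply: (elimT (prime_nt_dvdP pr_p ne)); rewrite order_dvdn a1.
Qed.

Lemma aa_inner : inner_aut G aa -> exists2 g, g \in 'Z(M) & [~ y, g] = u.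
Proof.
case=> g Gg hg.
have cMg : g \in 'C(M).
  apply/centP => m Mm; have := hg m (subsetP sMG _ Mm); rewrite aaM // => e.
  by apply/esym/commgP/conjg_fixP.
have cy : [~ y, g] = u by rewrite commgEl -hg // aay mulKg.
case: (boolP (g \in M)) => Mg; first by exists g; rewrite // inE Mg cMg.
have : y \in <[g]> * M by rewrite (gen_out maxM nMG Gg Mg).
case/mulsgP => c m /cycleP [k ->] Mm yE.
have cyg : commute g y.
  rewrite yE; apply: commuteM; first exact: commuteX.
  by have /centP := cMg; apply.
case/negP: un1; rewrite -cy; apply/commgP; exact: esym.
Qed.

End Constr.

Theorem lemma4p1 (gT : finGroupType) (G : {group gT}) (p : nat) :
  prime p -> odd p -> p.-group G -> ~~ abelian G -> cyclic 'Z(G) ->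
  ~~ (Omega1 p 'Z(G) \subset 'L_3(G) <*> powgrp p G) ->
  exists2 a : {perm gT}, a \in Aut G & (#[a] = p /\ ~ inner_aut G a).
Proof.
move=> pr_p odd_p pG nabG cZ nsub.
set H := 'L_3(G) <*> powgrp p G.
have [z Sz zH] : exists2 z, z \in [set x in 'Z(G) | x ^+ p == 1] & z \notin H.
  by apply/subsetPn; rewrite /Omega1 gen_subG in nsub.
case/setIdP: Sz => Zz /eqP zp.
have z1 : z != 1 by apply: contraNneq zH => ->; rewrite group1.
have Gz : z \in G by case/setIP: Zz.
have cGz : z \in 'C(G) by case/setIP: Zz.
have pz : <[z]> \proper G.
  rewrite properE cycle_subG Gz /=; apply/negP => sG; case/negP: nabG.
  exact: abelianS sG (cycle_abelian z).
have [M maxM szM] := @maxgroup_exists _ (fun H : {group gT} => H \proper G) _ pz.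
have nMG : G \subset 'N(M) := normal_norm (p_maximal_normal pG maxM).
have iM := p_maximal_index pG maxM.
have Mz : z \in M := subsetP szM z (cycle_id z).
have [sMG [y Gy My]] := properP (maxgroupp maxM).
have cz x : x \in G -> commute x z.
  by move=> Gx; have /centP := cGz; move/(_ x Gx)/commute_sym.
have L3 g : g \in G -> [~ y, [~ y, g]] \in 'L_3(G).
  move=> Gg; rewrite -invgR groupV; change ([~ y, g, y] \in 'L_3(G)); rewrite (lcnSn 1) (lcnSn 0) lcn1.
  by rewrite mem_commg // mem_commg.
have zHp v : v \in G -> z = v ^+ p -> False.
  move=> Gv e; case/negP: zH; rewrite e.
  apply: (subsetP (joing_subr _ _)); apply: mem_gen; apply/imsetP; by exists v.
case: (boolP [exists (w | w \in 'Z(M)), [~ y, w] == z]).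
  case/exists_inP => w Zw /eqP yw.
  have Mw : w \in M by case/setIP: Zw.
  have Gw : w \in G := subsetP sMG w Mw.
  have cMw : w \in 'C(M) by case/setIP: Zw.
  have w1 : w != 1 by apply: contraNneq z1 => e; rewrite -yw e commg1.
  have wy : [~ w, y] = z^-1 by rewrite -invgR yw.
  have cwz : commute w z^-1 by apply: commuteV; apply: cz.
  have cwpy : commute (w ^+ p) y.
    apply/commgP/conjg_fixP.
    by rewrite conjXg conjg_mulR wy expgMn // expVgn zp invg1 mulg1.
  have Zwp : w ^+ p \in 'Z(G).
    rewrite inE groupX //=; apply/centP => x Gx.
    have : x \in <[y]> * M by rewrite (gen_out maxM nMG Gy My).
    case/mulsgP => c m /cycleP [k ->] Mm ->.
    apply: commuteM; first exact: commuteX.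
    apply: commute_sym; apply: commuteX; apply: commute_sym.
    by have /centP := cMw; apply.
  have wp1 : w ^+ p = 1.
    apply/eqP; apply/negP => /negP vn1.
    have pv : p.-elt (w ^+ p) by apply: mem_p_elt pG _; rewrite groupX.
    have [k ok] := p_natP pv.
    case: k ok => [o1|k ok]; first by case/negP: vn1; rewrite -order_eq1 o1.
    set e := (p ^ k)%N.
    have eo : (e %| #[w ^+ p])%N by rewrite ok dvdn_exp2l.
    have ov : #[(w ^+ p) ^+ e] = p.
      rewrite orderXdiv // ok expnS mulnK //.
      by rewrite expn_gt0 prime_gt0.
    have oz : #[z] = p.
      have ne : #[z] != 1%N by rewrite order_eq1.
      by apply: (elimT (prime_nt_dvdP pr_p ne)); rewrite order_dvdn zp.
    have Zv' : (w ^+ p) ^+ e \in 'Z(G) by rewrite groupX.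
    have eqc : <[z]> :==: <[(w ^+ p) ^+ e]>.
      by rewrite (eq_subG_cyclic cZ) ?cycle_subG // -!orderE oz ov.
    have : z \in <[(w ^+ p) ^+ e]> by rewrite -(eqP eqc) cycle_id.
    case/cycleP => j zj; apply: (zHp (w ^+ (e * j))); first by rewrite groupX.
    by rewrite zj -!expgnA mulnC.
  have up : (y * w) ^+ p = y ^+ p.
    rewrite expMg_Rmul; last 2 first.
    - by rewrite wy.
    - by rewrite wy; apply: commuteV; apply: cz.
    rewrite wp1 mulg1 wy.
    have p2 : 0 < 2 < p.
      rewrite /= ltn_neqAle prime_gt1 // andbT; by apply: contraTneq odd_p => <-.
    have [q ->] : exists q, 'C(p, 2) = (p * q)%N.
      by exists ('C(p, 2) %/ p); rewrite mulnC divnK // prime_dvd_bin.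
    by rewrite expgnA expVgn zp invg1 expg1n mulg1.
  exists (aa pr_p maxM nMG iM Gy My Zw up); first exact: Aut_aa.
  split; first exact: (order_aa pr_p maxM nMG iM Gy My Zw up wp1 w1).
  move=> inn; have [g Zg yg] := aa_inner w1 inn.
  have Gg : g \in G by case/setIP: Zg => /(subsetP sMG).
  case/negP: zH; rewrite -yw -yg; apply: (subsetP (joing_subl _ _)).
  exact: L3.
move=> nex.
have ZMz : z \in 'Z(M).
  by rewrite inE Mz; apply: (subsetP (centS sMG)).
have up : (y * z) ^+ p = y ^+ p by rewrite expgMn ?zp ?mulg1 //; apply: cz.
exists (aa pr_p maxM nMG iM Gy My ZMz up); first exact: Aut_aa.
split; first exact: (order_aa pr_p maxM nMG iM Gy My ZMz up zp z1).
move=> inn; have [g Zg yg] := aa_inner z1 inn; case/negP: nex; apply/exists_inP; exists g => //.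
exact/eqP.
Qed.
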